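(* (1) Let $\mu>0$, $\rho>0$, and let $(x^*,s^* )\in\mathbb{R}^n\times\mathbb{R}^m$ be a local solution of the minimax problem $\min_{x\in\mathbb{R}^n}\max_{s\in\mathbb{R}^m}F(x,s;\mu,\rho)$, in the sense that $x^*$ is a local minimizer of $F(\cdot,s^*;\mu,\rho)$ and $s^*$ is a local maximizer of $F(x^*,\cdot;\mu,\rho)$. Then $$\nabla f(x^* )-\nabla c(x^* )s^*=0,\qquad c(x^* )-z^*=0,$$ where $z^*=z(x^*,s^*;\mu,\rho)$. (2) Let $\rho>0$ and suppose $(x^*,s^* )$ satisfies $\nabla f(x^* )-\nabla c(x^* )s^*=0$ and $c(x^* )-z^*=0$ with $z^*=z(x^*,s^*;0,\rho)$, i.e. $z_i^*=\frac{1}{2\rho}\big(|s_i^*-\rho c_i(x^* )|-(s_i^*-\rho c_i(x^* ))\big)$. Then $(x^*,s^* )$ is a KKT pair of problem (P): $\min f(x)$ s.t. $c(x)\ge0$, i.e. $\nabla f(x^* )-\nabla c(x^* )s^*=0$, $c(x^* )\ge 0$, $s^*\ge 0$, $c_i(x^* )s_i^*=0$ for all $i$.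
   Context: Let $f:\mathbb{R}^n\to\mathbb{R}$ and $c=(c_1,\dots,c_m):\mathbb{R}^n\to\mathbb{R}^m$ be twice continuously differentiable; $\nabla c(x)\in\mathbb{R}^{n\times m}$ denotes the matrix whose $i$-th column is $\nabla c_i(x)$. For parameters $\mu\ge0$, $\rho>0$ and variables $x\in\mathbb{R}^n$, $s\in\mathbb{R}^m$, define for $i=1,\dots,m$: $z_i(x,s;\mu,\rho)=\frac{1}{2\rho}\big(\sqrt{(s_i-\rho c_i(x))^2+4\rho\mu}-(s_i-\rho c_i(x))\big)$, $y_i(x,s;\mu,\rho)=\frac{1}{2\rho}\big(\sqrt{(s_i-\rho c_i(x))^2+4\rho\mu}+(s_i-\rho c_i(x))\big)$, and, for $\mu>0$, $h_i(x,s;\mu,\rho)=-\mu\ln z_i(x,s;\mu,\rho)+\frac{\rho}{2}y_i(x,s;\mu,\rho)^2-\frac{1}{2\rho}s_i^2$ and the augmented Lagrangian $F(x,s;\mu,\rho)=f(x)+\sum_{i=1}^m h_i(x,s;\mu,\rho)$. *)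

(* Defs.v *)
From HB Require Import structures.
From mathcomp Require Import all_boot all_order all_algebra.
From mathcomp Require Import all_classical all_reals all_analysis.
Set Implicit Arguments. Unset Strict Implicit. Unset Printing Implicit Defensive.
Import Order.TTheory GRing.Theory Num.Theory.
Import numFieldNormedType.Exports.
Local Open Scope ring_scope.

Section Defs.
Variable R : realType.

Definition basisv (n : nat) (j : 'I_n) : 'rV[R]_n := delta_mx 0 j.

Definition partial (n : nat) (g : 'rV[R]_n -> R) (j : 'I_n) : 'rV[R]_n -> R :=
  fun x => 'D_(basisv j) g x.

Definition C2 (n : nat) (g : 'rV[R]_n -> R) : Prop :=
  (forall j x, derivable g x (basisv j)) /\
  (forall j, continuous (partial g j)) /\
  (forall j k x, derivable (partial g j) x (basisv k)) /\
  (forall j k, continuous (partial (partial g j) k)).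

Variables (n m : nat) (c : 'I_m -> 'rV[R]_n -> R).

Definition zfun (mu rho : R) (x : 'rV[R]_n) (s : 'rV[R]_m) (i : 'I_m) : R :=
  let w := s 0 i - rho * c i x in
  (Num.sqrt (w ^+ 2 + 4 * rho * mu) - w) / (2 * rho).

Definition yfun (mu rho : R) (x : 'rV[R]_n) (s : 'rV[R]_m) (i : 'I_m) : R :=
  let w := s 0 i - rho * c i x in
  (Num.sqrt (w ^+ 2 + 4 * rho * mu) + w) / (2 * rho).

Definition hfun (mu rho : R) (x : 'rV[R]_n) (s : 'rV[R]_m) (i : 'I_m) : R :=
  - mu * ln (zfun mu rho x s i) + rho / 2 * (yfun mu rho x s i) ^+ 2
  - (s 0 i) ^+ 2 / (2 * rho).

Definition Faug (f : 'rV[R]_n -> R) (mu rho : R) (x : 'rV[R]_n) (s : 'rV[R]_m) : R :=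
  f x + \sum_(i < m) hfun mu rho x s i.

Definition stationary (f : 'rV[R]_n -> R) (x : 'rV[R]_n) (s : 'rV[R]_m) : Prop :=
  forall j : 'I_n, partial f j x - \sum_(i < m) partial (c i) j x * s 0 i = 0.
End Defs.

(* Main.v *)
Require Import Defs.
From HB Require Import structures.
From mathcomp Require Import all_boot all_order all_algebra.
From mathcomp Require Import all_classical all_reals all_analysis.
From mathcomp Require Import ring lra.
Import Order.TTheory GRing.Theory Num.Theory.
Import numFieldNormedType.Exports.
Local Open Scope ring_scope.
Set Implicit Arguments. Unset Strict Implicit.

Section Helpers.
Variable R : realType.

Lemma fermat_max (g : R -> R) (d : R) :
  (\forall t \near 0, g t <= g 0) -> is_derive (0:R) 1 g d -> d = 0.
Proof.
move=> cmax [dg <-].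
apply/eqP; rewrite eq_le; apply/andP; split.
  rewrite ['D_1 g 0]cvg_at_rightE; last exact: dg.
  apply: limr_le.
    rewrite -(cvg_at_rightE (fun h : R => h^-1 *: ((g \o shift 0) _ - g 0))) //.
    apply: cvg_trans dg; apply: cvg_app.
    move=> A [e egt0 Ae]; exists e => // x xe xgt0; apply: Ae => //.
    exact/lt0r_neq0.
  near=> h; apply: mulr_ge0_le0.
    by rewrite invr_ge0; apply: ltW; near: h; exists 1 => /=.
  rewrite subr_le0 /= [_%:A]mulr1 addr0.
  near: h. move/nbhs_ballP: cmax => [e e0 He].
  by exists e => // x xe _; apply: He.
rewrite ['D_1 g 0]cvg_at_leftE; last exact: dg.
apply: limr_ge.
  rewrite -(cvg_at_leftE (fun h : R => h^-1 *: ((g \o shift 0) _ - g 0))) //.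
  apply: cvg_trans dg; apply: cvg_app.
  move=> A [e egt0 Ae]; exists e => // x xe xgt0; apply: Ae => //.
  exact/ltr0_neq0.
near=> h; apply: mulr_le0.
  by rewrite invr_le0; apply: ltW; near: h; exists 1 => /=.
rewrite subr_le0 /= [_%:A]mulr1 addr0.
near: h. move/nbhs_ballP: cmax => [e e0 He].
by exists e => // x xe _; apply: He.
Unshelve. all: by end_near. Qed.


Lemma fermat_min (g : R -> R) (d : R) :
  (\forall t \near 0, g 0 <= g t) -> is_derive (0:R) 1 g d -> d = 0.
Proof.
move=> cmin dg; apply/eqP; rewrite -oppr_eq0; apply/eqP.
apply: (@fermat_max (fun t => - g t)).
  by near=> t; rewrite lerN2; near: t.
Unshelve. all: by end_near. Qed.

Lemma dir_deriv (k : nat) (f : 'rV[R]_k -> R) (a v : 'rV[R]_k) :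
  derivable f a v -> is_derive (0:R) 1 (fun t => f (a + t *: v)) ('D_v f a).
Proof.
move=> df.
have E : (fun h : R => h^-1 *: (((fun t => f (a + t *: v)) \o shift 0) (h *: 1)
      - (fun t => f (a + t *: v)) 0)) =
   (fun h => h^-1 *: ((f \o shift a) (h *: v) - f a)).
  apply/funext => h /=; by rewrite scale0r !addr0 [h *: 1]mulr1 [h *: v + a]addrC.
split; first by rewrite /derivable E. idtac.
all: by rewrite /derive E.
Qed.

Lemma near_line (k : nat) (P : 'rV[R]_k -> Prop) (a v : 'rV[R]_k) :
  (\forall x \near a, P x) -> \forall t \near (0:R), P (a + t *: v).
Proof.
move=> hP.
have cv : ((fun t : R => a + t *: v) @ (0:R) --> a + 0 *: v)%classic.
  apply: cvgD; first exact: cvg_cst.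
  apply: cvgZr_tmp. exact: cvg_id.
rewrite scale0r addr0 in cv.
exact: cv hP.
Qed.

End Helpers.

Section S.
Variable R : realType.
Variables (mu rho : R).
Hypotheses (mu0 : 0 < mu) (rho0 : 0 < rho).
Definition zv (w : R) := (Num.sqrt (w ^+ 2 + 4 * rho * mu) - w) / (2 * rho).
Definition yv (w : R) := (Num.sqrt (w ^+ 2 + 4 * rho * mu) + w) / (2 * rho).
Definition Phi (w : R) := - mu * ln (zv w) + rho / 2 * (yv w) ^+ 2.

Lemma Sgt w : `|w| < Num.sqrt (w ^+ 2 + 4 * rho * mu).
Proof.
rewrite -sqrtr_sqr ltr_sqrt; last by rewrite ltr_wpDl ?sqr_ge0 // !mulr_gt0.
by rewrite ltrDl !mulr_gt0.
Qed.

Lemma zv_gt0 w : 0 < zv w.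
Proof.
rewrite /zv divr_gt0 ?mulr_gt0 // subr_gt0.
exact: le_lt_trans (ler_norm w) (Sgt w).
Qed.

Lemma Phi_deriv w : is_derive w (1:R) Phi (yv w).
Proof.
set S := Num.sqrt (w ^+ 2 + 4 * rho * mu).
have Spos : 0 < w ^+ 2 + 4 * rho * mu by rewrite ltr_wpDl ?sqr_ge0 // !mulr_gt0.
have hq : is_derive w (1:R) (fun u : R => u ^+ 2 + 4 * rho * mu) (2 * w).
  by apply: is_derive_eq; rewrite ![_%:A]mulr1; ring.
have hS : is_derive w (1:R) (fun u : R => Num.sqrt (u ^+ 2 + 4 * rho * mu))
   ((2 * S)^-1 * (2 * w)).
  exact: (@is_derive1_comp _ Num.sqrt (fun u : R => u ^+ 2 + 4 * rho * mu) w _ _ (is_derive1_sqrt Spos) hq).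
have hz : is_derive w (1:R) zv (((2 * S)^-1 * (2 * w) - 1) / (2 * rho)).
  rewrite /zv. apply: is_derive_eq. by rewrite scaler0 add0r [LHS]mulrC.
have hy : is_derive w (1:R) yv (((2 * S)^-1 * (2 * w) + 1) / (2 * rho)).
  rewrite /yv. apply: is_derive_eq. by rewrite scaler0 add0r [LHS]mulrC.
have hl : is_derive w (1:R) (fun u => ln (zv u)) ((zv w)^-1 * (((2 * S)^-1 * (2 * w) - 1) / (2 * rho))).
  exact: (@is_derive1_comp _ (@ln R) zv w _ _ (is_derive1_ln (zv_gt0 w)) hz).
rewrite /Phi; apply: is_derive_eq.
rewrite -![_ *: _]/(_ * _) /yv /zv -/S.
have hSw : `|w| < S := Sgt w.
have hS2 : S ^+ 2 = w ^+ 2 + 4 * rho * mu by rewrite sqr_sqrtr // ltW.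
have S0 : S != 0 by rewrite gt_eqF // (le_lt_trans _ hSw).
have Sw0 : S - w != 0 by rewrite subr_eq0 gt_eqF // (le_lt_trans (ler_norm w) hSw).
have r0 : rho != 0 by rewrite gt_eqF.
have hmu : mu = (S ^+ 2 - w ^+ 2) / (4 * rho).
  by rewrite hS2 addrAC subrr add0r mulrAC divff ?mul1r // mulf_neq0.
clearbody S. clear hS hq hz hy hl hS2.
rewrite hmu. field. by rewrite S0 Sw0 r0.
Qed.


Lemma yv_zv w : yv w - zv w = w / rho.
Proof.
rewrite /yv /zv; field; by rewrite gt_eqF.
Qed.

Lemma Phi_comp (u : R -> R) (du : R) :
  is_derive (0:R) (1:R) u du -> is_derive (0:R) (1:R) (fun t => Phi (u t)) (yv (u 0) * du).
Proof.
move=> hu; exact: (@is_derive1_comp _ Phi u 0 _ _ (Phi_deriv (u 0)) hu).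
Qed.

End S.

Lemma deriv_sum (R : realType) (f0 : R -> R) (df0 : R) (m : nat)
  (h : 'I_m -> R -> R) (d : 'I_m -> R) :
  is_derive (0:R) (1:R) f0 df0 ->
  (forall k, is_derive (0:R) (1:R) (h k) (d k)) ->
  is_derive (0:R) (1:R) (fun t => f0 t + \sum_(k < m) h k t) (df0 + \sum_(k < m) d k).
Proof.
move=> h0 hk.
have -> : (fun t => f0 t + \sum_(k < m) h k t) = f0 + \sum_(k < m) h k.
  by apply/funext => t; rewrite fct_sumE.
exact: is_deriveD.
Qed.

Theorem theorem3p1 (R : realType) (n m : nat) (f : 'rV[R]_n -> R)
    (c : 'I_m -> 'rV[R]_n -> R) (hf : C2 f) (hc : forall i, C2 (c i)) :
  (forall (mu rho : R) (xs : 'rV[R]_n) (ss : 'rV[R]_m),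
      0 < mu -> 0 < rho ->
      (\forall x \near xs, Faug c f mu rho xs ss <= Faug c f mu rho x ss) ->
      (\forall s \near ss, Faug c f mu rho xs s <= Faug c f mu rho xs ss) ->
      stationary c f xs ss /\
      (forall i, c i xs - zfun c mu rho xs ss i = 0)) /\
  (forall (rho : R) (xs : 'rV[R]_n) (ss : 'rV[R]_m),
      0 < rho ->
      stationary c f xs ss ->
      (forall i, c i xs - zfun c 0 rho xs ss i = 0) ->
      stationary c f xs ss /\
      (forall i, 0 <= c i xs /\ 0 <= ss 0 i /\ c i xs * ss 0 i = 0)).
Proof.
split.
  move=> mu rho xs ss mu0 rho0 hmin hmax.
  have hfun_eq : forall x s i, hfun c mu rho x s i =
      Phi mu rho (s 0 i - rho * c i x) - s 0 i ^+ 2 / (2 * rho) by [].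
  have key_s : forall i, yfun c mu rho xs ss i - ss 0 i / rho = 0.
    move=> i.
    have FM := (@fermat_max _ (fun t : R => Faug c f mu rho xs (ss + t *: (@basisv R _ i)))). apply: FM.
      have := near_line ((@basisv R _ i)) hmax; apply: filterS => t.
      by rewrite scale0r addr0.
    have -> : (fun t : R => Faug c f mu rho xs (ss + t *: (@basisv R _ i))) =
      (fun t => (fun _ => f xs) t + \sum_(k < m)
        (fun k t => Phi mu rho ((ss 0 k + t * (k == i)%:R) - rho * c k xs)
            - (ss 0 k + t * (k == i)%:R) ^+ 2 / (2 * rho)) k t).
      apply/funext => t; rewrite /Faug; congr (_ + _); apply: eq_bigr => k _.
      by rewrite hfun_eq !mxE eqxx.
    apply: is_derive_eq.
      apply: (deriv_sum (d := fun k => (k == i)%:R * (yv mu rho (ss 0 k - rho * c k xs) - ss 0 k / rho))).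
      move=> k.
      have hu : is_derive (0:R) (1:R) (fun t : R => (ss 0 k + t * (k == i)%:R) - rho * c k xs) (k == i)%:R.
        by apply: is_derive_eq; rewrite -![_ *: _]/(_ * _); ring.
      have hP := Phi_comp mu0 rho0 hu.
      apply: is_derive_eq. rewrite -![_ *: _]/(_ * _) mul0r addr0.
      field. by rewrite gt_eqF.
    rewrite (bigD1 i) //= big1 ?addr0; last first.
      by move=> k /negbTE ->; rewrite mul0r.
    by rewrite eqxx mul1r add0r.
  have hy : forall i, rho * yfun c mu rho xs ss i = ss 0 i.
    move=> i; move/eqP: (key_s i); rewrite subr_eq0 => /eqP ->.
    by field; rewrite gt_eqF.
  split; last first.
    move=> i.
    have E := @yv_zv R mu rho rho0 (ss 0 i - rho * c i xs).
    have e2 : yfun c mu rho xs ss i = ss 0 i / rho.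
      by move/eqP: (key_s i); rewrite subr_eq0 => /eqP.
    change (c i xs - zv mu rho (ss 0 i - rho * c i xs) = 0).
    change (yv mu rho (ss 0 i - rho * c i xs) = ss 0 i / rho) in e2.
    have e1 : zv mu rho (ss 0 i - rho * c i xs) =
        yv mu rho (ss 0 i - rho * c i xs) - (ss 0 i - rho * c i xs) / rho.
      by rewrite -E; ring.
    by rewrite e1 e2; field; rewrite gt_eqF.
  move=> j.
  pose e := @basisv R _ j.
  apply: (@fermat_min _ (fun t : R => Faug c f mu rho (xs + t *: e) ss)).
    have := near_line e hmin; apply: filterS => t.
    by rewrite scale0r addr0.
  have -> : (fun t : R => Faug c f mu rho (xs + t *: e) ss) =
    (fun t => (fun t => f (xs + t *: e)) t + \sum_(k < m)
      (fun k t => Phi mu rho (ss 0 k - rho * c k (xs + t *: e))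
            - ss 0 k ^+ 2 / (2 * rho)) k t).
    apply/funext => t; rewrite /Faug; congr (_ + _); apply: eq_bigr => k _.
  apply: is_derive_eq.
    apply: (deriv_sum (d := fun k => yv mu rho (ss 0 k - rho * c k xs) * (- (rho * partial (c k) j xs)))).
      exact: dir_deriv (hf.1 j xs).
    move=> k.
    have hd := dir_deriv ((hc k).1 j xs).
    have hu : is_derive (0:R) (1:R) (fun t : R => ss 0 k - rho * c k (xs + t *: e))
        (- (rho * partial (c k) j xs)).
      by apply: is_derive_eq; rewrite add0r mul1r.
    have hP := Phi_comp mu0 rho0 hu.
    by apply: is_derive_eq; rewrite scale0r addr0 subr0.
  rewrite -sumrN; congr (_ + _); apply: eq_bigr => k _.
  set Y := yv mu rho _.
  have hyk : rho * Y = ss 0 k := hy k.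
  rewrite -hyk; ring.
move=> rho xs ss rho0 hst hz; split => // i.
have := hz i.
rewrite /zfun mulr0 addr0 sqrtr_sqr.
set w := ss 0 i - rho * c i xs.
move=> h.
have E : c i xs = (`|w| - w) / (2 * rho) by apply/eqP; rewrite -subr_eq0 h.
have [w0|w0] := leP 0 w.
  rewrite ger0_norm // subrr mul0r in E.
  move: w0; rewrite /w E; move=> w0.
  by rewrite mulr0 subr0 in w0; rewrite mul0r; split.
rewrite ltr0_norm // in E.
have E2 : c i xs * rho = - w by rewrite E; field; rewrite gt_eqF.
move: w0 E2; rewrite /w => w0 E2.
have s0 : ss 0 i = 0 by nra.
rewrite s0 mulr0; split => //; nra.
Qed.
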